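(* Let $\mathfrak g$ be a Kac–Moody algebra with Dynkin diagram $\Gamma$ and Weyl group $W$, and let $(u,v)\in W\times W$. Then the Berenstein–Fomin–Zelevinsky quiver $Q^{u,v}$, drawn on the cylinder $\Gamma\times\mathbb{R}$ in the standard way, is planar in each sheet: within any sheet, no two arrows of $Q^{u,v}$ cross.
   Context: Let $\Gamma$ have vertex set $[1,r]$ and generalized Cartan matrix $(a_{ij})$; vertices $i\neq j$ are adjacent in $\Gamma$ iff $a_{ij}<0$. $W$ is generated by the simple reflections $s_1,\dots,s_r$. BFZ quiver. Write a reduced word for $u$ using the negative indices $-1,\dots,-r$ (the letter $-j$ standing for $s_j$) and a reduced word for $v$ using positive indices, and let $\mathbf i=(i_1,\dots,i_m)$, $m=\ell(u)+\ell(v)$, be any shuffle of the two. Put $i_{-j}=-j$ for $j\in[1,r]$. For $k\in[-r,-1]\cup[1,m]$ let $k^+$ be the smallest $l>k$ with $|i_l|=|i_k|$, or $k^+=m+1$ if there is none. Let $\varepsilon(i)\in\{\pm1\}$ be the sign of $i$. An index $k$ is $\mathbf i$-exchangeable if both $k,k^+\in[-r,-1]\cup[1,m]$. The quiver $Q^{u,v}$ has vertex set $[-r,-1]\cup[1,m]$; for $k<l$ there is an arrow between $k$ and $l$ iff at least one of $k,l$ is exchangeable and one of: (horizontal) $l=k^+$, directed $k\to l$ iff $\varepsilon(i_l)=+1$; (inclined) $|i_k|,|i_l|$ adjacent in $\Gamma$ and either $l<k^+<l^+$ with $\varepsilon(i_l)=\varepsilon(i_{k^+})$, or $l<l^+<k^+$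 with $\varepsilon(i_l)=-\varepsilon(i_{l^+})$; an inclined arrow is directed $k\to l$ iff $\varepsilon(i_l)=-1$. Cylinder. The cylinder over $\Gamma$ (as a topological graph) is $\Gamma\times\mathbb{R}$; $\{x\}\times\mathbb{R}$ for a vertex $x$ is a string. An endpoint of $\Gamma$ is a vertex with one incident edge, a branching point one with more than two; a branch $\Gamma_{m,n}$ is a path between two vertices each of which is an endpoint or branching point, and $\Gamma_{m,n}\times\mathbb{R}$ is the sheet over it. The standard drawing places vertex $k$ of $Q^{u,v}$ at the point $(|i_k|,k)$ on the string over $|i_k|$ and draws arrows as straight segments (horizontal arrows on strings, inclined arrows between adjacent strings). *)

(* Defs.v *)
From HB Require Import structures.
From mathcomp Require Import all_boot all_order all_algebra.
Set Implicit Arguments. Unset Strict Implicit. Unset Printing Implicit Defensive.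
Import Order.TTheory GRing.Theory Num.Theory.
Local Open Scope ring_scope.

(* Vertex labels of Gamma are the natural numbers 1..r, as in the paper. *)
Definition in_range (r p : nat) : bool := (1 <= p <= r)%N.

Definition GCM (r : nat) (a : nat -> nat -> int) : Prop :=
  forall i j, in_range r i -> in_range r j ->
    [/\ a i i = 2, (i != j -> a i j <= 0) & (a i j = 0 <-> a j i = 0)].

Definition adjG (a : nat -> nat -> int) (p q : nat) : bool := (p != q) && (a p q < 0).

(* ---- Weyl group W, acting on the root lattice (coordinates w.r.t. the
   simple roots alpha_1..alpha_r): s_i(alpha_j) = alpha_j - a_ij alpha_i. *)
Definition sref (r : nat) (a : nat -> nat -> int) (i : nat) (x : nat -> int)
  : nat -> int :=
  fun j => if j == i then x j - \sum_(1 <= k < r.+1) x k * a i k else x j.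

Definition wact (r : nat) (a : nat -> nat -> int) (w : seq nat) (x : nat -> int) :=
  foldr (sref r a) x w.

Definition sroot (j : nat) : nat -> int := fun k => if k == j then 1 else 0.

Definition weyl_eq (r : nat) (a : nat -> nat -> int) (w w' : seq nat) : Prop :=
  forall j k, in_range r j -> in_range r k ->
    wact r a w (sroot j) k = wact r a w' (sroot j) k.

Definition reduced_word (r : nat) (a : nat -> nat -> int) (w : seq nat) : Prop :=
  all (in_range r) w /\
  forall w', all (in_range r) w' -> weyl_eq r a w' w -> (size w <= size w')%N.

(* the negative letters form the word for u, the positive ones the word for v *)
Definition uword (i : seq int) : seq nat := [seq `|x|%N | x <- i & x < 0].
Definition vword (i : seq int) : seq nat := [seq `|x|%N | x <- i & 0 < x].

(* i_k, with i_{-j} = -j *)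
Definition ix (i : seq int) (k : int) : int :=
  if k < 0 then k else nth 0 i (`|k|%N.-1).

Definition isV (r : nat) (i : seq int) (k : int) : bool :=
  ((- (r%:Z) <= k) && (k <= -1)) || ((1 <= k) && (k <= (size i)%:Z)).

Definition kplus (i : seq int) (k : int) : int :=
  head ((size i).+1)%:Z
    [seq l <- [seq n%:Z | n <- iota 1 (size i)] |
       (k < l) && (`|ix i l| == `|ix i k|)%N].

Definition exch (r : nat) (i : seq int) (k : int) : bool :=
  isV r i k && isV r i (kplus i k).

Definition horiz (i : seq int) (k l : int) : bool := (k < l) && (l == kplus i k).

Definition inclined (a : nat -> nat -> int) (i : seq int) (k l : int) : bool :=
  (k < l) && adjG a `|ix i k|%N `|ix i l|%N &&
  ( ((l < kplus i k) && (kplus i k < kplus i l)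
       && ((0 < ix i l) == (0 < ix i (kplus i k))))
    || ((l < kplus i l) && (kplus i l < kplus i k)
       && ((0 < ix i l) != (0 < ix i (kplus i l))))).

Definition qedge (r : nat) (a : nat -> nat -> int) (i : seq int) (k l : int) : bool :=
  (k < l) && isV r i k && isV r i l && (exch r i k || exch r i l)
  && (horiz i k l || inclined a i k l).

(* for k < l, the arrow between k and l is directed k -> l *)
Definition dir_up (i : seq int) (k l : int) : bool :=
  if horiz i k l then 0 < ix i l else ix i l < 0.

Definition qarrow (r : nat) (a : nat -> nat -> int) (i : seq int) (k l : int) : bool :=
  (qedge r a i k l && dir_up i k l) || (qedge r a i l k && ~~ dir_up i l k).

Definition deg (r : nat) (a : nat -> nat -> int) (p : nat) : nat :=
  count (adjG a p) (iota 1 r).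

Definition special (r : nat) (a : nat -> nat -> int) (p : nat) : bool :=
  (deg r a p == 1)%N || (2 < deg r a p)%N.

Definition is_branch (r : nat) (a : nat -> nat -> int) (br : seq nat) : Prop :=
  [/\ (1 < size br)%N, uniq br, all (in_range r) br,
      (forall j, (j.+1 < size br)%N -> adjG a (nth 0%N br j) (nth 0%N br j.+1))
    & special r a (nth 0%N br 0) && special r a (last 0%N br)] /\
  (forall j, (0 < j)%N -> (j.+1 < size br)%N -> ~~ special r a (nth 0%N br j)).

(* the arrow between k and l lies in the sheet over the branch br:
   horizontal arrows on a string of br, inclined arrows over an edge of br *)
Definition in_sheet (i : seq int) (br : seq nat) (k l : int) : bool :=
  let p := `|ix i k|%N in let q := `|ix i l|%N in
  ((p == q) && (p \in br)) ||
  has (fun j => ((p == nth 0%N br j) && (q == nth 0%N br j.+1))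
             || ((q == nth 0%N br j) && (p == nth 0%N br j.+1)))
      (iota 0 (size br).-1).

(* standard drawing of the sheet over br = [p_0..p_t] in the plane:
   the string over p_j is the line x = j, vertex k sits at height k *)
Definition vpt (R : realFieldType) (i : seq int) (br : seq nat) (k : int) : R * R :=
  ((index `|ix i k|%N br)%:R, k%:~R).

Definition on_segment (R : realFieldType) (P A B : R * R) : Prop :=
  exists t : R, [/\ 0 <= t, t <= 1 &
    P = ((1 - t) * A.1 + t * B.1, (1 - t) * A.2 + t * B.2)].

(* Main.v *)
Require Import Defs.
From HB Require Import structures.
From mathcomp Require Import all_boot all_order all_algebra.
From mathcomp Require Import zify ring lra.
Import Order.TTheory GRing.Theory Num.Theory.
Local Open Scope ring_scope.
Set Implicit Arguments. Unset Strict Implicit.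

Definition sx (i : seq int) (k : int) : nat := `|ix i k|%N.

Lemma head_le (Pr : pred int) (d : int) (a N m : nat) :
  (a <= m < a + N)%N -> Pr m%:Z ->
  head d [seq l <- [seq n%:Z | n <- iota a N] | Pr l] <= m%:Z.
Proof.
elim: N a => [|N IH] a /=; first lia.
move=> hm hP; case: ifP => hPa /=; first lia.
have ham : a != m by apply/eqP => e; rewrite e hP in hPa.
apply: IH => //; lia.
Qed.

Lemma kplus_le i k m : 0 < m -> m <= (size i)%:Z -> k < m -> sx i m = sx i k ->
  kplus i k <= m.
Proof.
case: m => [n|n] //= n0 ns km e.
rewrite /kplus; apply: (@head_le _ _ 1 (size i) n); first lia.
by rewrite /= km /=; apply/eqP.
Qed.

Lemma kplus_mem i k : kplus i k <= (size i)%:Z -> k < kplus i k.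
Proof.
rewrite /kplus; set s := filter _ _.
have : forall x, x \in s -> k < x by move=> x; rewrite mem_filter => /andP[/andP[]].
case: s => [|x t] /= hs; first lia.
by move=> _; apply: hs; rewrite mem_head.
Qed.

Lemma isV_facts r i k : isV r i k -> k != 0 /\ k <= (size i)%:Z.
Proof. rewrite /isV => /orP[/andP[h1 h2]|/andP[h1 h2]]; lia. Qed.

Definition SP (br : seq nat) (x y : nat) : Prop :=
  (x = y /\ x \in br) \/ exists j, (j.+1 < size br)%N /\
   ((index x br = j /\ index y br = j.+1) \/ (index x br = j.+1 /\ index y br = j)).

Definition good i br k l : Prop :=
  [/\ k < l, k != 0, l != 0,
      (forall m, m != 0 -> k < m -> m < l -> sx i m != sx i k) &
      SP br (sx i k) (sx i l)].

Lemma SP_sym br x y : SP br x y -> SP br y x.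
Proof.
case=> [[-> h]|[j [hj [[h1 h2]|[h1 h2]]]]]; first by left.
  by right; exists j; split=> //; right.
by right; exists j; split=> //; left.
Qed.

Lemma in_sheet_SP i br k l : uniq br -> in_sheet i br k l -> SP br (sx i k) (sx i l).
Proof.
move=> ub; rewrite /in_sheet /= => /orP[/andP[/eqP e m]|/hasP[j]].
  by left.
rewrite mem_iota => /andP[_ hj].
have hj1 : (j.+1 < size br)%N by move: hj; case: (size br) => //= n; lia.
have hj0 : (j < size br)%N by lia.
move=> /orP[/andP[/eqP e1 /eqP e2]|/andP[/eqP e1 /eqP e2]]; right; exists j;
  split=> //; [left|right]; rewrite /sx e1 e2 !index_uniq //.
Qed.

Lemma good_of r a i br k l : qedge r a i k l -> SP br (sx i k) (sx i l) -> good i br k l.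
Proof.
move=> /andP[/andP[/andP[/andP[kl vk] vl] _] hi] sp.
have lkp : l <= kplus i k.
  move: hi => /orP[/andP[_ /eqP ->]//|].
  rewrite /inclined => /andP[_ /orP[/andP[/andP[h _] _]|/andP[/andP[h1 h2] _]]]; lia.
have [k0 ks] := isV_facts vk; have [l0 ls] := isV_facts vl.
split=> // m m0 km ml; apply/negP => /eqP e.
have [mneg|mpos] := ltP m 0.
  have kneg : k < 0 by lia.
  move: e; rewrite /sx /ix mneg kneg; lia.
have := kplus_le (i:=i) (k:=k) (m:=m); lia.
Qed.

Section Geo.
Variable R : realFieldType.
Implicit Types P A B : R * R.

Lemma seg_t0 A B : ((1 - 0) * A.1 + 0 * B.1, (1 - 0) * A.2 + 0 * B.2) = A.
Proof. by case: A => a1 a2 /=; congr (_, _); ring. Qed.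
Lemma seg_t1 A B : ((1 - 1) * A.1 + 1 * B.1, (1 - 1) * A.2 + 1 * B.2) = B.
Proof. by case: B => b1 b2 /=; congr (_, _); ring. Qed.

Lemma seg_sym P A B : on_segment P A B -> on_segment P B A.
Proof.
case=> t [t0 t1 ->]; exists (1 - t); split; [lra|lra|].
congr (_, _); ring.
Qed.

Lemma S_nat P A B (c n : nat) :
  ((A.1 = c%:R /\ B.1 = c.+1%:R) \/ (A.1 = c.+1%:R /\ B.1 = c%:R)) ->
  on_segment P A B -> P.1 = n%:R -> P = A \/ P = B.
Proof.
move=> hAB [t [t0 t1 HP]] hn.
have ht : t = 0 \/ t = 1.
  have [h|h] := leqP n c.
    have hr : n%:R <= c%:R :> R by rewrite ler_nat.
    case: hAB => [[e1 e2]|[e1 e2]]; rewrite HP e1 e2 -nat1r /= in hn; [left|right]; lra.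
  case: (ltnP c.+1 n) => h2.
    have hr : (c.+2)%:R <= n%:R :> R by rewrite ler_nat.
    rewrite -!nat1r in hr; exfalso.
    case: hAB => [[e1 e2]|[e1 e2]]; rewrite HP e1 e2 -nat1r /= in hn; lra.
  have e : n = c.+1 by apply/eqP; rewrite eqn_leq h2 h.
  subst n.
  case: hAB => [[e1 e2]|[e1 e2]]; rewrite HP e1 e2 /= in hn; rewrite -nat1r in hn; [right|left]; lra.
by case: ht => e; subst t; rewrite HP ?seg_t0 ?seg_t1; [left|right].
Qed.

Lemma S_range P A B (c : nat) :
  ((A.1 = c%:R /\ B.1 = c.+1%:R) \/ (A.1 = c.+1%:R /\ B.1 = c%:R)) ->
  on_segment P A B -> c%:R <= P.1 <= c.+1%:R.
Proof.
move=> hAB [t [t0 t1 HP]]; rewrite HP /=.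
case: hAB => [[e1 e2]|[e1 e2]]; rewrite e1 e2 -nat1r; apply/andP; split; nra.
Qed.

Lemma GL P A1 B1 A2 B2 : A1.1 = A2.1 -> B1.1 = B2.1 -> B1.1 = A1.1 + 1 ->
  A1.2 <= A2.2 -> B1.2 <= B2.2 -> (A1.2 < A2.2 \/ B1.2 < B2.2) ->
  on_segment P A1 B1 -> on_segment P A2 B2 ->
  (P = A1 \/ P = B1) /\ (P = A2 \/ P = B2).
Proof.
move=> ex1 ex2 ex3 h1 h2 h3 [t [t0 t1 HP]] [s [s0 s1 HQ]].
have ex4 : B2.1 = A2.1 + 1 by rewrite -ex2 -ex1.
have ets : s = t.
  have e1 := congr1 fst HP; have e2 := congr1 fst HQ.
  rewrite /= ex3 in e1; rewrite /= ex4 -ex1 in e2.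
  lra.
subst s.
have e1 := congr1 snd HP; have e2 := congr1 snd HQ; rewrite /= in e1 e2.
case: h3 => h3.
  have et : t = 1 by nra.
  subst t; by move: HP HQ; rewrite !seg_t1 => -> ->; split; right.
have et : t = 0 by nra.
subst t; by move: HP HQ; rewrite !seg_t0 => -> ->; split; left.
Qed.

Lemma GL' P A1 B1 A2 B2 : A1.1 = A2.1 -> B1.1 = B2.1 -> B1.1 = A1.1 + 1 ->
  ((A1.2 <= A2.2 /\ B1.2 <= B2.2 /\ (A1.2 < A2.2 \/ B1.2 < B2.2)) \/
   (A2.2 <= A1.2 /\ B2.2 <= B1.2 /\ (A2.2 < A1.2 \/ B2.2 < B1.2))) ->
  on_segment P A1 B1 -> on_segment P A2 B2 ->
  (P = A1 \/ P = B1) /\ (P = A2 \/ P = B2).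
Proof.
move=> ex1 ex2 ex3 [[h1 [h2 h3]]|[h1 [h2 h3]]] s1 s2.
  exact: GL.
have [] := GL (P:=P) (A1:=A2) (B1:=B2) (A2:=A1) (B2:=B1) _ _ _ h1 h2 h3 s2 s1 => //.
by rewrite -ex1 -ex2.
Qed.

End Geo.

Lemma vptE (R : realFieldType) i br k : vpt R i br k = ((index (sx i k) br)%:R, k%:~R).
Proof. by []. Qed.

Lemma idx_mem (x : nat) br n : index x br = n -> (n < size br)%N -> x \in br.
Proof. by rewrite -index_mem => ->. Qed.

Lemma V_info (R : realFieldType) i br k l (P : R * R) :
  k < l -> sx i k = sx i l -> on_segment P (vpt R i br k) (vpt R i br l) ->
  P.1 = (index (sx i k) br)%:R /\ k%:~R <= P.2 <= l%:~R.
Proof.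
move=> kl e [t [t0 t1 ->]]; rewrite !vptE /= -e.
have klr : k%:~R < l%:~R :> R by rewrite ltr_int.
split; first ring.
apply/andP; split; nra.
Qed.

Lemma Vert (R : realFieldType) i br k l m (P : R * R) :
  good i br k l -> sx i k = sx i l -> sx i k \in br -> m != 0 -> sx i m \in br ->
  on_segment P (vpt R i br k) (vpt R i br l) -> P = vpt R i br m ->
  P = vpt R i br k \/ P = vpt R i br l.
Proof.
case=> kl k0 l0 N _ ekl kb m0 mb s1 HPm.
have [hx /andP[hy1 hy2]] := V_info kl ekl s1.
rewrite HPm vptE /= in hx hy1 hy2.
move/eqP: hx; rewrite eqr_nat => /eqP ei.
have esm : sx i m = sx i k by rewrite -(nth_index 0%N mb) ei (nth_index 0%N kb).
rewrite ler_int in hy1; rewrite ler_int in hy2.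
have H : ~ ((k < m) /\ (m < l)) by case=> a b; move: (N m m0 a b); rewrite esm eqxx.
have : (m = k) \/ (m = l) by lia.
by case=> e; subst m; [left|right].
Qed.

Lemma comb (k l k' l' : int) (bk bk' : bool) :
 k < l -> k' < l' ->
 ((bk' == bk) ==> ~~ ((k < k') && (k' < l))) -> ((~~ bk' == bk) ==> ~~ ((k < l') && (l' < l))) ->
 ((bk == bk') ==> ~~ ((k' < k) && (k < l'))) -> ((~~ bk == bk') ==> ~~ ((k' < l) && (l < l'))) ->
 ((k == k') ==> (bk == bk')) -> ((l == l') ==> (bk == bk')) ->
 ((k == l') ==> (bk == ~~ bk')) -> ((l == k') ==> (bk == ~~ bk')) ->
 ~ (k = k' /\ l = l') ->
 let hL := if bk then k else l in let hR := if bk then l else k in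
 let hL' := if bk' then k' else l' in let hR' := if bk' then l' else k' in
 (hL <= hL' /\ hR <= hR' /\ (hL < hL' \/ hR < hR')) \/
 (hL' <= hL /\ hR' <= hR /\ (hL' < hL \/ hR' < hR)).
Proof. by case: bk; case: bk' => /=; lia. Qed.

Definition strip br (x y : nat) j :=
  (j.+1 < size br)%N /\
  ((index x br = j /\ index y br = j.+1) \/ (index x br = j.+1 /\ index y br = j)).

Lemma strip_hS (R : realFieldType) i br k l j :
  strip br (sx i k) (sx i l) j ->
  ((vpt R i br k).1 = j%:R /\ (vpt R i br l).1 = j.+1%:R) \/
  ((vpt R i br k).1 = j.+1%:R /\ (vpt R i br l).1 = j%:R).
Proof. by case=> _; rewrite !vptE /=; case=> [[-> ->]|[-> ->]]; [left|right]. Qed.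

Lemma strip_mem br x y j : strip br x y j -> x \in br /\ y \in br.
Proof. by case=> h [[e1 e2]|[e1 e2]]; split; apply: (idx_mem (n:=_)); eauto; lia. Qed.

Definition concl (R : realFieldType) i br k l k' l' (P : R * R) :=
  (P = vpt R i br k \/ P = vpt R i br l) /\ (P = vpt R i br k' \/ P = vpt R i br l').

Lemma caseVS (R : realFieldType) i br k l k' l' j (P : R * R) :
  good i br k l -> sx i k = sx i l -> sx i k \in br ->
  good i br k' l' -> strip br (sx i k') (sx i l') j ->
  on_segment P (vpt R i br k) (vpt R i br l) ->
  on_segment P (vpt R i br k') (vpt R i br l') -> concl i br k l k' l' P.
Proof.
move=> g1 e1 b1 g2 st s1 s2.
have g1' := g1; case: g1' => kl _ _ _ _; case: g2 => kl' k0' l0' _ _.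
have [hx _] := V_info kl e1 s1.
have [m1 m2] := strip_mem st.
have [e|e] := S_nat (strip_hS R st) s2 hx; (split; [|by [left|right]]).
  exact: (Vert g1 e1 b1 k0' m1 s1 e).
exact: (Vert g1 e1 b1 l0' m2 s1 e).
Qed.

Lemma concl_sym (R : realFieldType) i br k l k' l' (P : R * R) :
  concl i br k l k' l' P -> concl i br k' l' k l P.
Proof. by case. Qed.

Lemma caseVV (R : realFieldType) i br k l k' l' (P : R * R) :
  good i br k l -> sx i k = sx i l -> sx i k \in br ->
  good i br k' l' -> sx i k' = sx i l' -> sx i k' \in br ->
  ~ (k = k' /\ l = l') ->
  on_segment P (vpt R i br k) (vpt R i br l) ->
  on_segment P (vpt R i br k') (vpt R i br l') -> concl i br k l k' l' P.
Proof.
case=> kl k0 l0 N1 _ e1 b1; case=> kl' k0' l0' N2 _ e2 b2 ne s1 s2.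
have [hx1 /andP[hy1 hy2]] := V_info kl e1 s1.
have [hx2 /andP[hy3 hy4]] := V_info kl' e2 s2.
have ei : index (sx i k) br = index (sx i k') br.
  by apply/eqP; rewrite -(eqr_nat R) -hx1 -hx2.
have esk : sx i k' = sx i k by rewrite -(nth_index 0%N b1) ei (nth_index 0%N b2).
have F1 : ~ ((k < k') /\ (k' < l)) by case=> a b; move: (N1 k' k0' a b); rewrite esk eqxx.
have F2 : ~ ((k < l') /\ (l' < l)) by case=> a b; move: (N1 l' l0' a b); rewrite -e2 esk eqxx.
have F3 : ~ ((k' < k) /\ (k < l')) by case=> a b; move: (N2 k k0 a b); rewrite esk eqxx.
have F4 : ~ ((k' < l) /\ (l < l')) by case=> a b; move: (N2 l l0 a b); rewrite -e1 esk eqxx.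
have : (l <= k') \/ (l' <= k) by lia.
move: P hx1 hx2 hy1 hy2 hy3 hy4 {s1 s2} => [px py] /= hx1 hx2 hy1 hy2 hy3 hy4.
case=> h; rewrite -(ler_int R) in h.
  have ey : py = l%:~R by lra.
  have ey' : py = k'%:~R by lra.
  by split; [right; rewrite vptE hx1 -e1 ey|left; rewrite vptE hx2 ey'].
have ey : py = k%:~R by lra.
have ey' : py = l'%:~R by lra.
by split; [left; rewrite vptE hx1 ey|right; rewrite vptE hx2 -e2 ey'].
Qed.

Lemma caseSSd (R : realFieldType) i br k l k' l' j j' (P : R * R) :
  strip br (sx i k) (sx i l) j -> strip br (sx i k') (sx i l') j' -> j != j' ->
  on_segment P (vpt R i br k) (vpt R i br l) ->
  on_segment P (vpt R i br k') (vpt R i br l') -> concl i br k l k' l' P.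
Proof.
move=> st1 st2 ne s1 s2.
have /andP[r1 r1'] := S_range (strip_hS R st1) s1.
have /andP[r2 r2'] := S_range (strip_hS R st2) s2.
have [n hn] : exists n, P.1 = n%:R.
  case: (ltngtP j j') => h; last by rewrite h eqxx in ne.
    exists j'; have : (j.+1)%:R <= j'%:R :> R by rewrite ler_nat.
    rewrite -!nat1r in r1' r2' * => h'; lra.
  exists j; have : (j'.+1)%:R <= j%:R :> R by rewrite ler_nat.
  rewrite -!nat1r in r1' r2' * => h'; lra.
have [e|e] := S_nat (strip_hS R st1) s1 hn;
have [e'|e'] := S_nat (strip_hS R st2) s2 hn; by split; [by [left|right]|by [left|right]].
Qed.

Lemma seg_norm (R : realFieldType) i br k l j (P : R * R) :
  strip br (sx i k) (sx i l) j -> on_segment P (vpt R i br k) (vpt R i br l) ->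
  on_segment P (j%:R, (if index (sx i k) br == j then k else l)%:~R)
                 (j.+1%:R, (if index (sx i k) br == j then l else k)%:~R).
Proof.
have nj : (j.+1 == j) = false by apply/eqP; lia.
case=> _ [[e1 e2]|[e1 e2]]; rewrite !vptE e1 e2 ?eqxx ?nj //.
exact: seg_sym.
Qed.

Lemma seg_back (R : realFieldType) i br k l j (P : R * R) :
  strip br (sx i k) (sx i l) j ->
  (P = (j%:R, (if index (sx i k) br == j then k else l)%:~R) \/
   P = (j.+1%:R, (if index (sx i k) br == j then l else k)%:~R)) ->
  P = vpt R i br k \/ P = vpt R i br l.
Proof.
have nj : (j.+1 == j) = false by apply/eqP; lia.
case=> _ [[e1 e2]|[e1 e2]]; rewrite !vptE e1 e2 ?eqxx ?nj /=; first by [].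
by case; [right|left].
Qed.

Lemma sameside br j (x y : nat) :
  (index x br = j \/ index x br = j.+1) -> (index y br = j \/ index y br = j.+1) ->
  x \in br -> y \in br -> (index x br == j) = (index y br == j) -> x = y.
Proof.
move=> hx hy xb yb e.
have ei : index x br = index y br.
  case: hx => ex; case: hy => ey; move: e; rewrite ex ey //= ?eqxx;
  (have nj : (j.+1 == j) = false by apply/eqP; lia); rewrite ?nj //.
by rewrite -(nth_index 0%N xb) ei (nth_index 0%N yb).
Qed.

Lemma caseSSs (R : realFieldType) i br k l k' l' j (P : R * R) :
  good i br k l -> good i br k' l' -> ~ (k = k' /\ l = l') ->
  strip br (sx i k) (sx i l) j -> strip br (sx i k') (sx i l') j ->
  on_segment P (vpt R i br k) (vpt R i br l) ->
  on_segment P (vpt R i br k') (vpt R i br l') -> concl i br k l k' l' P.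
Proof.
case=> kl k0 l0 N1 _; case=> kl' k0' l0' N2 _ ne st1 st2 s1 s2.
have [mk ml] := strip_mem st1; have [mk' ml'] := strip_mem st2.
have nj : (j.+1 == j) = false by apply/eqP; lia.
have [hk hl bl] : [/\ index (sx i k) br = j \/ index (sx i k) br = j.+1,
   index (sx i l) br = j \/ index (sx i l) br = j.+1 &
   (index (sx i l) br == j) = ~~ (index (sx i k) br == j)].
  by case: st1 => _ [[-> ->]|[-> ->]]; rewrite ?eqxx ?nj; split; auto.
have [hk' hl' bl'] : [/\ index (sx i k') br = j \/ index (sx i k') br = j.+1,
   index (sx i l') br = j \/ index (sx i l') br = j.+1 &
   (index (sx i l') br == j) = ~~ (index (sx i k') br == j)].
  by case: st2 => _ [[-> ->]|[-> ->]]; rewrite ?eqxx ?nj; split; auto.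
set bk := index (sx i k) br == j in bl hk *.
set bk' := index (sx i k') br == j in bl' hk' *.
have NF1 m : m != 0 -> sx i m = sx i k -> ~~ ((k < m) && (m < l)).
  by move=> m0 e; apply/negP => /andP[a b]; move: (N1 m m0 a b); rewrite e eqxx.
have NF2 m : m != 0 -> sx i m = sx i k' -> ~~ ((k' < m) && (m < l')).
  by move=> m0 e; apply/negP => /andP[a b]; move: (N2 m m0 a b); rewrite e eqxx.
have := @comb k l k' l' bk bk' kl kl'.
have -> : (bk' == bk) ==> ~~ ((k < k') && (k' < l)).
  by apply/implyP => /eqP e; apply: NF1 => //; exact: (sameside hk' hk mk' mk e).
have -> : (~~ bk' == bk) ==> ~~ ((k < l') && (l' < l)).
  by apply/implyP => /eqP e; apply: NF1 => //; apply: (sameside hl' hk ml' mk); rewrite bl'.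
have -> : (bk == bk') ==> ~~ ((k' < k) && (k < l')).
  by apply/implyP => /eqP e; apply: NF2 => //; exact: (sameside hk hk' mk mk' e).
have -> : (~~ bk == bk') ==> ~~ ((k' < l) && (l < l')).
  by apply/implyP => /eqP e; apply: NF2 => //; apply: (sameside hl hk' ml mk'); rewrite bl.
have -> : (k == k') ==> (bk == bk') by apply/implyP => /eqP e; rewrite /bk /bk' e.
have -> : (l == l') ==> (bk == bk').
  by apply/implyP => /eqP e; move: bl bl'; rewrite e => -> /negb_inj ->.
have -> : (k == l') ==> (bk == ~~ bk').
  by apply/implyP => /eqP e; rewrite -bl' /bk e.
have -> : (l == k') ==> (bk == ~~ bk').
  by apply/implyP => /eqP e; rewrite /bk' -e bl negbK.
move=> /(_ isT isT isT isT isT isT isT isT ne) /= hc.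
set A1 : R * R := (j%:R, (if bk then k else l)%:~R).
set B1 : R * R := (j.+1%:R, (if bk then l else k)%:~R).
set A2 : R * R := (j%:R, (if bk' then k' else l')%:~R).
set B2 : R * R := (j.+1%:R, (if bk' then l' else k')%:~R).
have hord : ((A1.2 <= A2.2 /\ B1.2 <= B2.2 /\ (A1.2 < A2.2 \/ B1.2 < B2.2)) \/
   (A2.2 <= A1.2 /\ B2.2 <= B1.2 /\ (A2.2 < A1.2 \/ B2.2 < B1.2))).
  by rewrite /= !ler_int !ltr_int.
have [c1 c2] := @GL' R P A1 B1 A2 B2 erefl erefl (esym (natr1 _)) hord (seg_norm st1 s1) (seg_norm st2 s2).
by split; [exact: (seg_back st1 c1)|exact: (seg_back st2 c2)].
Qed.

Lemma core (R : realFieldType) i br k l k' l' (P : R * R) :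
  good i br k l -> good i br k' l' -> ~ (k = k' /\ l = l') ->
  on_segment P (vpt R i br k) (vpt R i br l) ->
  on_segment P (vpt R i br k') (vpt R i br l') -> concl i br k l k' l' P.
Proof.
move=> g1 g2 ne s1 s2.
have g1' := g1; have g2' := g2.
case: g1' => _ _ _ _ [[e1 b1]|[j st1]]; case: g2' => _ _ _ _ [[e2 b2]|[j' st2]].
- exact: caseVV.
- exact: (caseVS g1 e1 b1 g2 st2).
- apply: concl_sym; exact: (caseVS g2 e2 b2 g1 st1).
- case: (eqVneq j j') => [e|nj].
    by subst j'; exact: (caseSSs g1 g2 ne st1 st2).
  exact: (caseSSd st1 st2 nj).
Qed.

Lemma good_arrow r a i br k l : uniq br -> qarrow r a i k l -> in_sheet i br k l ->
  good i br k l \/ good i br l k.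
Proof.
move=> ub /orP[/andP[qe _]|/andP[qe _]] is1.
  by left; apply: (good_of qe); exact: in_sheet_SP.
by right; apply: (good_of qe); apply: SP_sym; exact: in_sheet_SP.
Qed.

Unset Implicit Arguments.

Theorem mainTheorem2 (r : nat) (a : nat -> nat -> int) (i : seq int)
    (br : seq nat) (R : realFieldType) (k l k' l' : int) (P : R * R) :
  GCM r a ->
  all (fun x => in_range r `|x|%N) i ->
  reduced_word r a (uword i) ->
  reduced_word r a (vword i) ->
  is_branch r a br ->
  qarrow r a i k l -> qarrow r a i k' l' ->
  in_sheet i br k l -> in_sheet i br k' l' ->
  ~ ((k = k' /\ l = l') \/ (k = l' /\ l = k')) ->
  on_segment P (vpt R i br k) (vpt R i br l) ->
  on_segment P (vpt R i br k') (vpt R i br l') ->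
  (P = vpt R i br k \/ P = vpt R i br l) /\
  (P = vpt R i br k' \/ P = vpt R i br l').
Proof.
move=> _ _ _ _ [[_ ub _ _ _] _] q1 q2 is1 is2 ne s1 s2.
have s1' := seg_sym s1; have s2' := seg_sym s2.
case: (good_arrow ub q1 is1) => g1; case: (good_arrow ub q2 is2) => g2.
- have := core g1 g2 _ s1 s2; rewrite /concl; tauto.
- have := core g1 g2 _ s1 s2'; rewrite /concl; tauto.
- have := core g1 g2 _ s1' s2; rewrite /concl; tauto.
- have := core g1 g2 _ s1' s2'; rewrite /concl; tauto.
Qed.
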